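(* Assume $p_1<1$, and assume either that $\mu\le1$, or that $\mu>1$ and $p_0+\cdots+p_r<1$. Then for this integer $r\ge0$, the equation $G_r(t)=t$ has a unique solution $t=q_{[0,r]}$ in $[0,1]$, and $$\mathbf{P}[M\le r]=q_{[0,r]}.$$
   Context: Let $p=(p_0,p_1,p_2,\dots)$ be a probability distribution on the nonnegative integers with mean $\mu=\sum_k kp_k\in(0,\infty)$, and let $\tau(p)$ be a Galton–Watson tree with offspring distribution $p$: it starts with a single root at generation $0$, and every vertex independently has $k$ children with probability $p_k$. The out-degree of a vertex is its number of children. $M_n$ denotes the maximal out-degree among the vertices of generation $n$ (with $M_n=0$ if generation $n$ is empty), and $M=\sup_{n\ge0}M_n$ is the global maximal out-degree (possibly infinite). For $x\in[0,1]$, $G_r(x)=\sum_{k=0}^r p_kx^k$ is the generating function of $p$ truncated at $r$. *)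

(* Defs.v *)
From Stdlib Require Import Reals Lra List.
Import ListNotations.
Open Scope R_scope.

Definition Gtrunc (p : nat -> R) (r : nat) (x : R) : R :=
  sum_f_R0 (fun k => p k * x ^ k) r.

Inductive ptree : Type := PNode : list ptree -> ptree.

Fixpoint tuples {A : Type} (k : nat) (l : list A) : list (list A) :=
  match k with
  | O => [[]]
  | S k' => flat_map (fun x => map (cons x) (tuples k' l)) l
  end.

(* The (finitely many, pairwise distinct) possible shapes of the first n
   generations' offspring structure of a GW tree (generations 0..n, with the
   vertices of generation n shown as leaves since their offspring is not
   revealed), on the event that every vertex of generations 0..n-1 has at most
   r children. *)
Fixpoint prefixes (r n : nat) : list ptree :=
  match n with
  | O => [PNode []]
  | S n' => flat_map (fun k => map PNode (tuples k (prefixes r n'))) (seq 0 (S r))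
  end.

(* GW probability of observing the depth-n prefix t: product of p_{deg v}
   over the vertices v of generations 0..n-1 (independent offspring counts). *)
Fixpoint gw_weight (p : nat -> R) (n : nat) (t : ptree) : R :=
  match n with
  | O => 1
  | S n' =>
      match t with
      | PNode ts => p (length ts) * fold_right (fun s acc => gw_weight p n' s * acc) 1 ts
      end
  end.

(* P[ M_0 <= r, ..., M_{n-1} <= r ] for the Galton-Watson tree tau(p). *)
Definition prob_max_upto (p : nat -> R) (r n : nat) : R :=
  fold_right Rplus 0 (map (gw_weight p n) (prefixes r n)).

(* P[M <= r] = lim_n P[max_{k<n} M_k <= r] (continuity from above of the law
   of tau(p), since {M <= r} is the decreasing intersection of these events). *)
Definition is_prob_M_le (p : nat -> R) (r : nat) (l : R) : Prop :=
  Un_cv (prob_max_upto p r) l.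

(* Main.v *)
Require Import Defs.
From Stdlib Require Import Reals Lra Lia List.
Import ListNotations.
Open Scope R_scope.

Definition sumL (l : list R) := fold_right Rplus 0 l.

Lemma sumL_app l1 l2 : sumL (l1 ++ l2) = sumL l1 + sumL l2.
Proof. induction l1; simpl; [lra|unfold sumL in *; simpl; rewrite IHl1; lra]. Qed.

Lemma sumL_flat_map {A B} (f : B -> R) (g : A -> list B) l :
  sumL (map f (flat_map g l)) = sumL (map (fun x => sumL (map f (g x))) l).
Proof.
  induction l; simpl; [reflexivity|].
  rewrite map_app, sumL_app, IHl. reflexivity.
Qed.

Lemma sumL_scal {A} (f : A -> R) c l :
  sumL (map (fun y => c * f y) l) = c * sumL (map f l).
Proof. induction l; unfold sumL in *; simpl; [ring|rewrite IHl; ring]. Qed.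

Lemma sumL_ext {A} (f g : A -> R) l :
  (forall x, In x l -> f x = g x) -> sumL (map f l) = sumL (map g l).
Proof. intros H; f_equal; apply map_ext_in; auto. Qed.

Lemma tuples_length {A} k (l : list A) ts : In ts (tuples k l) -> length ts = k.
Proof.
  revert ts; induction k; simpl; intros ts H.
  - destruct H as [<-|[]]; reflexivity.
  - apply in_flat_map in H as [x [_ H]]. apply in_map_iff in H as [t [<- H]].
    simpl; f_equal; auto.
Qed.

Definition prodF {A} (w : A -> R) (ts : list A) :=
  fold_right (fun s acc => w s * acc) 1 ts.

Lemma sum_tuples {A} (w : A -> R) l k :
  sumL (map (prodF w) (tuples k l)) = (sumL (map w l)) ^ k.
Proof.
  induction k; simpl.
  - unfold sumL; simpl; ring.
  - rewrite sumL_flat_map.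
    transitivity (sumL (map (fun x => w x * sumL (map (prodF w) (tuples k l))) l)).
    + apply sumL_ext; intros x _. rewrite map_map. unfold prodF at 1; simpl.
      apply (sumL_scal (prodF w)).
    + rewrite IHk. rewrite (sumL_ext _ (fun x => sumL (map w l) ^ k * w x)).
      * rewrite sumL_scal. simpl; ring.
      * intros; ring.
Qed.

Lemma sumL_seq (f : nat -> R) r : sumL (map f (seq 0 (S r))) = sum_f_R0 f r.
Proof.
  induction r; [unfold sumL; simpl; ring|].
  rewrite seq_S, map_app, sumL_app, IHr. simpl. unfold sumL; simpl; ring.
Qed.

Lemma P_rec p r n :
  prob_max_upto p r (S n) = Gtrunc p r (prob_max_upto p r n).
Proof.
  unfold prob_max_upto. fold (sumL (map (gw_weight p (S n)) (prefixes r (S n)))).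
  fold (sumL (map (gw_weight p n) (prefixes r n))).
  change (prefixes r (S n)) with (flat_map (fun k => map PNode (tuples k (prefixes r n))) (seq 0 (S r))).
  rewrite sumL_flat_map. unfold Gtrunc. rewrite <- sumL_seq.
  apply sumL_ext; intros k _. rewrite map_map.
  transitivity (sumL (map (fun ts => p k * prodF (gw_weight p n) ts) (tuples k (prefixes r n)))).
  - apply sumL_ext; intros ts Hts. simpl. rewrite (tuples_length _ _ _ Hts). reflexivity.
  - rewrite sumL_scal, sum_tuples. reflexivity.
Qed.

Lemma P_0 p r : prob_max_upto p r 0 = 1.
Proof. unfold prob_max_upto; simpl; ring. Qed.

Lemma pow_le1 y k : 0 <= y <= 1 -> y ^ k <= 1.
Proof. intros; rewrite <- (pow1 k); apply pow_incr; lra. Qed.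

Fixpoint D (k : nat) (x y : R) : R :=
  match k with O => 0 | S k' => y ^ k' + x * D k' x y end.

Lemma D_eq k x y : y ^ k - x ^ k = (y - x) * D k x y.
Proof. induction k; simpl; [ring|]. replace (y * y ^ k - x * x ^ k) with ((y-x)*y^k + x*(y^k-x^k)) by ring.
  rewrite IHk; ring. Qed.

Lemma D_nonneg k x y : 0 <= x -> 0 <= y -> 0 <= D k x y.
Proof. intros; induction k; simpl; [lra|]. pose proof (pow_le y k H0). nra. Qed.

Lemma D_le k x y : 0 <= x <= 1 -> 0 <= y <= 1 -> D k x y <= INR k.
Proof.
  intros; induction k; cbn [D]; [simpl; lra|]. rewrite S_INR.
  assert (y ^ k <= 1) by (apply pow_le1; lra).
  pose proof (D_nonneg k x y ltac:(lra) ltac:(lra)). pose proof (pos_INR k). nra.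
Qed.

Lemma D_lt k x y : 0 <= x < 1 -> 0 <= y <= 1 -> (2 <= k)%nat -> D k x y < INR k.
Proof.
  intros Hx Hy Hk. destruct k as [|k]; [lia|]. cbn [D]. rewrite S_INR.
  assert (y ^ k <= 1) by (apply pow_le1; lra).
  pose proof (D_le k x y ltac:(lra) ltac:(lra)).
  assert (1 <= INR k) by (apply (le_INR 1); lia).
  pose proof (D_nonneg k x y ltac:(lra) ltac:(lra)). nra.
Qed.

Lemma D_mono k a b : 0 <= a <= b -> b <= 1 -> D k a b <= D k b 1.
Proof.
  intros; induction k; simpl; [lra|].
  assert (b ^ k <= 1) by (apply pow_le1; lra). rewrite pow1.
  pose proof (D_nonneg k a b ltac:(lra) ltac:(lra)). nra.
Qed.

Lemma G_diff p r a b :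
  Gtrunc p r b - Gtrunc p r a = (b - a) * sum_f_R0 (fun k => p k * D k a b) r.
Proof.
  unfold Gtrunc; induction r; simpl.
  - ring.
  - rewrite <- (Rmult_comm (D (S r) a b)) . simpl D.
    replace (sum_f_R0 (fun k : nat => p k * b ^ k) r + p (S r) * (b * b ^ r) -
     (sum_f_R0 (fun k : nat => p k * a ^ k) r + p (S r) * (a * a ^ r)))
     with ((sum_f_R0 (fun k : nat => p k * b ^ k) r - sum_f_R0 (fun k : nat => p k * a ^ k) r)
        + p (S r) * (b ^ (S r) - a ^ (S r))) by (simpl; ring).
    rewrite IHr, D_eq. simpl D. ring.
Qed.

Lemma sum_le_sum (f g : nat -> R) r : (forall k, (k <= r)%nat -> f k <= g k) ->
  sum_f_R0 f r <= sum_f_R0 g r.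
Proof. intros H; induction r; simpl; [apply H; lia|].
  assert (f (S r) <= g (S r)) by (apply H; lia).
  assert (sum_f_R0 f r <= sum_f_R0 g r) by (apply IHr; intros; apply H; lia). lra. Qed.

Lemma G_mono p r a b : (forall k, 0 <= p k) -> 0 <= a <= b -> Gtrunc p r a <= Gtrunc p r b.
Proof.
  intros Hp H. unfold Gtrunc; apply sum_le_sum; intros k _.
  apply Rmult_le_compat_l; auto. apply pow_incr; auto.
Qed.

Lemma G_cv p r u l : Un_cv u l -> Un_cv (fun n => Gtrunc p r (u n)) (Gtrunc p r l).
Proof.
  intros Hu.
  assert (Hpow : forall k, Un_cv (fun n => u n ^ k) (l ^ k)).
  { induction k; simpl.
    - intros e He; exists 0%nat; intros; unfold R_dist; rewrite Rminus_diag, Rabs_R0; lra.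
    - apply CV_mult; auto. }
  unfold Gtrunc; induction r; simpl.
  - apply (CV_mult (fun _ => p 0%nat) (fun n => 1)).
    + intros e He; exists 0%nat; intros; unfold R_dist; rewrite Rminus_diag, Rabs_R0; lra.
    + intros e He; exists 0%nat; intros; unfold R_dist; rewrite Rminus_diag, Rabs_R0; lra.
  - apply CV_plus; auto. apply (CV_mult (fun _ => p (S r))); [|apply (Hpow (S r))].
    intros e He; exists 0%nat; intros; unfold R_dist; rewrite Rminus_diag, Rabs_R0; lra.
Qed.

Lemma sum_lin (f g : nat -> R) c r :
  sum_f_R0 (fun k => f k + c * g k) r = sum_f_R0 f r + c * sum_f_R0 g r.
Proof. induction r; simpl; [ring|rewrite IHr; ring]. Qed.

Lemma sum_nonneg (f : nat -> R) r : (forall k, 0 <= f k) -> 0 <= sum_f_R0 f r.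
Proof. intros H; induction r; simpl; [auto|pose proof (H (S r)); lra]. Qed.

Definition w2 (k : nat) : R := if Nat.leb 2 k then 1 else 0.
Definition e1 (k : nat) : R := if Nat.eqb k 1 then 1 else 0.

Lemma D_Sle k a b : 0 <= a <= 1 -> 0 <= b <= 1 -> D (S k) a b <= 1 + a * INR k.
Proof. intros. cbn [D]. pose proof (D_le k a b H H0). pose proof (pow_le1 b k H0). nra. Qed.

Lemma term1 k a b : 0 <= a < 1 -> 0 <= b <= 1 -> D k a b <= INR k - (1 - a) * w2 k.
Proof.
  intros. destruct k as [|[|j]]; unfold w2; simpl Nat.leb; cbv iota.
  - simpl; lra.
  - simpl; lra.
  - pose proof (D_Sle (S j) a b ltac:(lra) H0). rewrite !S_INR in *.
    pose proof (pos_INR j). nra.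
Qed.

Lemma term2 k r : (k <= r)%nat -> INR k <= e1 k + INR r * w2 k.
Proof.
  intros. unfold e1, w2. destruct k as [|[|j]]; simpl Nat.leb; simpl Nat.eqb; cbv iota.
  - simpl; pose proof (pos_INR r); lra.
  - simpl; pose proof (pos_INR r); lra.
  - apply le_INR in H. lra.
Qed.

Lemma sum_e1 p r : sum_f_R0 (fun k => e1 k * p k) r <= Rmax 0 (p 1%nat).
Proof.
  assert (forall r, sum_f_R0 (fun k => e1 k * p k) r = match r with O => 0 | _ => p 1%nat end).
  { induction r0. - simpl. unfold e1. simpl. ring.
    - change (sum_f_R0 (fun k => e1 k * p k) (S r0)) with (sum_f_R0 (fun k => e1 k * p k) r0 + e1 (S r0) * p (S r0)).
      rewrite IHr0. unfold e1. destruct r0; simpl; ring. }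
  rewrite H. destruct r; [apply Rmax_l|apply Rmax_r].
Qed.

Lemma Gtrunc_nonneg p r t : (forall k, 0 <= p k) -> 0 <= t -> 0 <= Gtrunc p r t.
Proof. intros; unfold Gtrunc; apply sum_nonneg; intros; pose proof (pow_le t k H0); pose proof (H k); nra. Qed.

Lemma no_two p mu r a b
  (p_nonneg : forall k, 0 <= p k)
  (HS : sum_f_R0 p r <= 1)
  (HM : sum_f_R0 (fun k => INR k * p k) r <= mu)
  (p1_lt : p 1%nat < 1)
  (hyp : mu <= 1 \/ (1 < mu /\ sum_f_R0 p r < 1))
  (G1 : Gtrunc p r 1 = sum_f_R0 p r) :
  0 <= a -> a < b -> b <= 1 -> Gtrunc p r a = a -> Gtrunc p r b = b -> False.
Proof.
  intros Ha Hab Hb Fa Fb.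
  pose proof (G_diff p r a b) as E. rewrite Fa, Fb in E.
  set (A := sum_f_R0 (fun k => p k * D k a b) r) in *.
  assert (HA : A = 1).
  { apply (Rmult_eq_reg_l (b - a)); lra. }
  destruct hyp as [Hmu | [_ Hs]].
  - set (T := sum_f_R0 (fun k => w2 k * p k) r).
    set (Ee := sum_f_R0 (fun k => e1 k * p k) r).
    set (B := sum_f_R0 (fun k => INR k * p k) r) in *.
    assert (H1 : A <= B + (-(1-a)) * T).
    { unfold A, B, T. rewrite <- sum_lin. apply sum_le_sum; intros k _.
      pose proof (term1 k a b ltac:(lra) ltac:(lra)). pose proof (p_nonneg k). nra. }
    assert (H2 : B <= Ee + INR r * T).
    { unfold Ee, B, T. rewrite <- sum_lin. apply sum_le_sum; intros k Hk.
      pose proof (term2 k r Hk). pose proof (p_nonneg k). nra. }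
    assert (H3 : Ee <= Rmax 0 (p 1%nat)) by apply sum_e1.
    assert (H4 : Rmax 0 (p 1%nat) < 1) by (apply Rmax_lub_lt; lra).
    assert (H5 : 0 <= T).
    { apply sum_nonneg; intros k; unfold w2; pose proof (p_nonneg k); destruct (Nat.leb 2 k); lra. }
    pose proof (pos_INR r).
    assert (H6 : (1 - a) * T <= 0) by lra.
    assert (H7 : T <= 0).
    { destruct (Rle_dec T 0); auto. assert (0 < (1-a) * T) by (apply Rmult_lt_0_compat; lra). lra. }
    nra.
  - assert (Hb1 : b < 1).
    { destruct (Rle_lt_or_eq_dec b 1 Hb) as [Hl|He]; auto. subst b. rewrite G1 in Fb. lra. }
    pose proof (G_diff p r b 1) as E2. rewrite G1, Fb in E2.
    assert (HQ : A <= sum_f_R0 (fun k => p k * D k b 1) r).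
    { apply sum_le_sum; intros k _. apply Rmult_le_compat_l; auto. apply D_mono; lra. }
    nra.
Qed.

Theorem lemma2p5 (p : nat -> R) (mu : R) (r : nat)
  (p_nonneg : forall k, 0 <= p k)
  (p_sum : infinite_sum p 1)
  (p_mean : infinite_sum (fun k => INR k * p k) mu)
  (mu_pos : 0 < mu)
  (p1_lt : p 1%nat < 1)
  (hyp : mu <= 1 \/ (1 < mu /\ sum_f_R0 p r < 1)) :
  exists q : R,
    (0 <= q <= 1 /\ Gtrunc p r q = q) /\
    (forall t : R, 0 <= t <= 1 -> Gtrunc p r t = t -> t = q) /\
    is_prob_M_le p r q.
Proof.
  assert (HS : sum_f_R0 p r <= 1) by (apply sum_incr; auto).
  assert (HM : sum_f_R0 (fun k => INR k * p k) r <= mu).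
  { apply sum_incr; auto. intros; pose proof (pos_INR n); pose proof (p_nonneg n); nra. }
  assert (G1 : Gtrunc p r 1 = sum_f_R0 p r).
  { unfold Gtrunc; apply sum_eq; intros; rewrite pow1; ring. }
  set (P := prob_max_upto p r).
  assert (HP : forall n, P (S n) = Gtrunc p r (P n)) by (intros; apply P_rec).
  assert (HB : forall n, 0 <= P n <= 1).
  { induction n. { unfold P; rewrite P_0; lra. }
    rewrite HP. split; [apply Gtrunc_nonneg; [exact p_nonneg|lra]|].
    rewrite <- G1 in HS. pose proof (G_mono p r (P n) 1 p_nonneg ltac:(lra)). lra. }
  assert (HD : Un_decreasing P).
  { intro n; induction n.
    - rewrite HP. unfold P; rewrite P_0. rewrite <- G1 in HS; lra.
    - rewrite (HP (S n)). rewrite (HP n) at 2. apply G_mono; auto. pose proof (HB (S n)). lra. }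
  assert (Hlb : has_lb P).
  { exists 0. intros x [n ->]. unfold opp_seq. pose proof (HB n). lra. }
  destruct (decreasing_cv P HD Hlb) as [L HL].
  assert (L1 : L <= 1). { pose proof (decreasing_ineq P L HD HL 0). unfold P in H; rewrite P_0 in H. exact H. }
  assert (L0 : 0 <= L).
  { apply Rle_cv_lim with (Un := fun _ => 0) (Vn := P); [intros n; apply HB| |exact HL].
    intros e He; exists 0%nat; intros; unfold R_dist; rewrite Rminus_diag, Rabs_R0; lra. }
  assert (GL : Gtrunc p r L = L).
  { apply (UL_sequence (fun n => Gtrunc p r (P n))).
    - apply G_cv; auto.
    - intros e He. destruct (HL e He) as [N HN]. exists N; intros n Hn.
      rewrite <- HP. apply HN. lia. }
  exists L. split; [split; [lra|exact GL]|split].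
  - intros t Ht Gt. destruct (Rtotal_order t L) as [Hlt|[Heq|Hgt]]; auto.
    + exfalso; apply (no_two p mu r t L); auto; lra.
    + exfalso; apply (no_two p mu r L t); auto; lra.
  - exact HL.
Qed.
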